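(* Let $n\geq 2$ be an integer and let $\sigma\colon E(K_{4n})\to\{-1,1\}$ be such that the graph $\left(V(K_{4n}),\sigma^{-1}(1)\right)$ is the disjoint union of a complete graph of order $3n+2$ and $n-2$ isolated vertices. Then $\left|\sigma\left(E(K_{4n})\right)\right|=n^2+11n+2$, and $|\sigma(M)|\geq 4$ for every perfect matching $M$ in $K_{4n}$.
   Context: $K_{4n}$ denotes the complete graph on $4n$ vertices, with vertex set $V(K_{4n})$ and edge set $E(K_{4n})$. For a set $F$ of edges, $\sigma(F)=\sum_{e\in F}\sigma(e)$; $\sigma^{-1}(1)$ is the set of edges with value $1$. *)

(* Defs.v *)
From mathcomp Require Import all_boot all_order all_algebra.
Set Implicit Arguments. Unset Strict Implicit. Unset Printing Implicit Defensive.
Import Order.TTheory GRing.Theory Num.Theory.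

Definition Kedges (m : nat) : {set {set 'I_m}} := [set e : {set 'I_m} | #|e| == 2%N].

(* A signature sigma : E(K_m) -> {-1,1}, represented as a function on vertex
   sets whose values on edges lie in {-1,1} (values elsewhere irrelevant). *)
Definition is_signature (m : nat) (sigma : {set 'I_m} -> int) : Prop :=
  forall e, e \in Kedges m -> sigma e = 1%R \/ sigma e = (-1)%R.

Definition sigma_sum (m : nat) (sigma : {set 'I_m} -> int)
    (F : {set {set 'I_m}}) : int := (\sum_(e in F) sigma e)%R.

Definition perfect_matching (m : nat) (M : {set {set 'I_m}}) : Prop :=
  M \subset Kedges m /\ forall v : 'I_m, #|[set e in M | v \in e]| = 1%N.

(* Main.v *)
Require Import Defs.
From mathcomp Require Import all_boot all_order all_algebra.
From mathcomp Require Import zify.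
Import Order.TTheory GRing.Theory Num.Theory.

Lemma bin2d m : ('C(m,2)).*2 = m * m.-1.
Proof. elim: m => [|m IH] //; rewrite binS bin1 doubleD IH; case: m {IH} => //= m; lia. Qed.

Lemma dcount (T : finType) (M : {set {set T}}) (A : {set T}) :
  \sum_(v in A) #|[set e in M | v \in e]| = \sum_(e in M) #|A :&: e|.
Proof.
transitivity (\sum_(v in A) \sum_(e in M) ((v \in e) : nat)).
  apply: eq_bigr => v _; rewrite -sum1_card big_mkcond /= [RHS]big_mkcond /=.
  by apply: eq_bigr => e _; rewrite !inE; case: (e \in M); case: (v \in e).
rewrite exchange_big /=; apply: eq_bigr => e _.
rewrite -sum1_card big_mkcond /= [RHS]big_mkcond /=.
by apply: eq_bigr => v _; rewrite !inE; case: (v \in A); case: (v \in e).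
Qed.

Lemma split_sum (m : nat) (sigma : {set 'I_m} -> int) (S : {set 'I_m}) (F : {set {set 'I_m}}) :
  (forall e, e \in F -> sigma e = if e \subset S then 1%R else (-1)%R) ->
  sigma_sum sigma F = (#|[set e in F | e \subset S]|%:Z - #|[set e in F | ~~ (e \subset S)]|%:Z)%R.
Proof.
move=> sv; rewrite /sigma_sum (bigID (fun e : {set 'I_m} => e \subset S)) /=.
have -> : (\sum_(e in F | e \subset S) sigma e = \sum_(e in [set e in F | e \subset S]) 1)%R.
  apply: eq_big => [e|e /andP[eF eS]]; first by rewrite inE.
  by rewrite sv // eS.
have -> : (\sum_(e in F | ~~ (e \subset S)) sigma e = \sum_(e in [set e in F | ~~ (e \subset S)]) (-1))%R.
  apply: eq_big => [e|e /andP[eF eS]]; first by rewrite inE.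
  by rewrite sv // (negbTE eS).
by rewrite !sumr_const mulNrn !natz.
Qed.

Lemma split_card (T : finType) (F : {set T}) (P : pred T) :
  #|[set e in F | P e]| + #|[set e in F | ~~ P e]| = #|F|.
Proof.
rewrite -(cardsID [set e | P e] F); congr (_ + _); apply: eq_card => e; by rewrite !inE // andbC.
Qed.

Arguments dcount {T}.
Arguments split_sum {m sigma S F}.
Arguments split_card {T}.

Theorem mainTheorem5 (n : nat) (sigma : {set 'I_(4 * n)} -> int) :
  (2 <= n)%N ->
  is_signature sigma ->
  (exists S : {set 'I_(4 * n)}, #|S| = (3 * n + 2)%N /\
     forall e, e \in Kedges (4 * n) -> (sigma e == 1%R) = (e \subset S)) ->
  `|sigma_sum sigma (Kedges (4 * n))|%R = Posz (n ^ 2 + 11 * n + 2)%N /\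
  (forall M : {set {set 'I_(4 * n)}}, perfect_matching M ->
     (Posz 4 <= `|sigma_sum sigma M|)%R).
Proof.
move=> n2 hsig [S [cS hS]].
have sv : forall e, e \in Kedges (4 * n) -> sigma e = if e \subset S then 1%R else (-1)%R.
  move=> e eK; have := hS e eK; case: (e \subset S) => /eqP // ne1.
  by case: (hsig e eK).
split.
  rewrite (split_sum sv).
  have cK := split_card (Kedges (4 * n)) (fun e => e \subset S).
  have cP : #|[set e in Kedges (4 * n) | e \subset S]| = 'C(3 * n + 2, 2).
    rewrite -cS -cards_draws; apply: eq_card => e; rewrite !inE; by rewrite andbC.
  have cKK : #|Kedges (4 * n)| = 'C(4 * n, 2).
    by rewrite -[in RHS](card_ord (4 * n)) -card_draws.
  move: cK; rewrite cP cKK.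
  set b := #|[set e in _ | ~~ _]| => cK.
  have d1 := bin2d (3 * n + 2); have d2 := bin2d (4 * n).
  have eab : 'C(3 * n + 2, 2) = b + (n ^ 2 + 11 * n + 2).
    have h1 : (3 * n + 2).-1 = 3 * n + 1 by lia.
    have h2 : (4 * n).-1 = 4 * (n - 2) + 7 by lia.
    move: d1 d2; rewrite -cK h1 h2 => d1 d2.
    have h3 : n = (n - 2) + 2 by lia.
    move: (n - 2) h3 d1 d2 => k -> d1 d2; nia.
  rewrite eab PoszD addrAC subrr add0r ger0_norm //.
move=> M [MK hM].
have svM : forall e, e \in M -> sigma e = if e \subset S then 1%R else (-1)%R.
  by move=> e eM; apply: sv; apply: (subsetP MK).
rewrite (split_sum svM).
have cM := split_card M (fun e => e \subset S).
set p := #|[set e in M | e \subset S]| in cM *.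
set q := #|[set e in M | ~~ (e \subset S)]| in cM *.
have hT := dcount M [set: 'I_(4 * n)].
have hSS := dcount M S.
have e1 : \sum_(v in [set: 'I_(4 * n)]) #|[set e in M | v \in e]| = 4 * n.
  rewrite (eq_bigr (fun _ => 1)); last by move=> v _; rewrite hM.
  by rewrite sum1_card cardsT card_ord.
have e2 : \sum_(e in M) #|[set: 'I_(4 * n)] :&: e| = #|M| * 2.
  rewrite -sum_nat_const; apply: eq_bigr => e eM.
  by rewrite setTI; have := subsetP MK e eM; rewrite inE => /eqP.
have e3 : \sum_(v in S) #|[set e in M | v \in e]| = 3 * n + 2.
  rewrite (eq_bigr (fun _ => 1)); last by move=> v _; rewrite hM.
  by rewrite sum1_card cS.
have e4 : \sum_(e in M) #|S :&: e| <= p * 2 + q * 1.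
  rewrite (bigID (fun e : {set 'I_(4 * n)} => e \subset S)) /= leq_add //.
    rewrite /p -sum_nat_const (eq_bigl (fun e => (e \in M) && (e \subset S))); last first.
      by move=> e; rewrite inE.
    apply: leq_sum => e /andP[eM _]; rewrite (leq_trans (subset_leq_card (subsetIr _ _))) //.
    by have := subsetP MK e eM; rewrite inE => /eqP ->.
  rewrite /q -sum_nat_const (eq_bigl (fun e => (e \in M) && ~~ (e \subset S))); last first.
    by move=> e; rewrite inE.
  apply: leq_sum => e /andP[eM eS].
  have := subsetP MK e eM; rewrite inE => /eqP c2.
  have := cardsID S e; rewrite c2 setIC.
  have : 0 < #|e :\: S| by rewrite card_gt0 setD_eq0.
  by move=> g c; have := leq_add (leqnn #|S :&: e|) g; rewrite c addn1 ltnS.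
have hpq : (q + 4 <= p)%N by lia.
rewrite subzn; last by lia.
rewrite ger0_norm // lez_nat; lia.
Qed.
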